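(* Let $0<3x_0<L$, $\mu>0$, $\nu\in\mathbb R$, and consider $(r\ddot u)''+\mu(q\dot u)'+pu=\nu$ on $(0,2L)$. (i) If $\mu\neq1$, then $u_\nu(s)=\frac{\nu}{(2-\lambda)(1-\mu)}H(s)^{-1}$ is a solution. (ii) If $\mu=1$, then $u_\nu(s)=\frac{\nu}{2\lambda}\theta(s)(s-L)$ is a solution.
   Context: $\sigma=\pi\sqrt{x_0/(L+x_0)}$, $k=L/\sin\sigma$, $\lambda=\frac{2L}{L+x_0}$, $H(s)=\frac{\pi}{\sigma\sqrt{k^2-(s-L)^2}}$ for $s\in[0,2L]$, $\theta(s)=\int_0^sH(l)\,dl$. Set $r=2/H^3$, $q=2/H$, $p=(2-\lambda)H$; derivatives are with respect to $s$. *)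

(* Defs.v *)
From Stdlib Require Import Reals.
From Coquelicot Require Import Coquelicot.
Open Scope R_scope.

Definition sigma (L x0 : R) : R := PI * sqrt (x0 / (L + x0)).
Definition kk (L x0 : R) : R := L / sin (sigma L x0).
Definition lam (L x0 : R) : R := 2 * L / (L + x0).
Definition H (L x0 : R) (s : R) : R :=
  PI / (sigma L x0 * sqrt (kk L x0 ^ 2 - (s - L) ^ 2)).
Definition theta (L x0 : R) (s : R) : R := RInt (H L x0) 0 s.

Definition rcoef (L x0 : R) (s : R) : R := 2 / (H L x0 s ^ 3).
Definition qcoef (L x0 : R) (s : R) : R := 2 / H L x0 s.
Definition pcoef (L x0 : R) (s : R) : R := (2 - lam L x0) * H L x0 s.

Definition is_solution (L x0 mu nu : R) (u : R -> R) : Prop :=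
  forall s, 0 < s < 2 * L ->
    ex_derive u s /\
    ex_derive (Derive u) s /\
    ex_derive (fun t => rcoef L x0 t * Derive_n u 2 t) s /\
    ex_derive (Derive (fun t => rcoef L x0 t * Derive_n u 2 t)) s /\
    ex_derive (fun t => qcoef L x0 t * Derive u t) s /\
    Derive_n (fun t => rcoef L x0 t * Derive_n u 2 t) 2 s
      + mu * Derive (fun t => qcoef L x0 t * Derive u t) s
      + pcoef L x0 s * u s = nu.

(* Main.v *)
Require Import Defs.
From Stdlib Require Import Reals.
From Coquelicot Require Import Coquelicot.
Open Scope R_scope.

From Stdlib Require Import Lra Psatz FunctionalExtensionality.

Lemma basics (L x0 : R) : 0 < 3 * x0 -> 3 * x0 < L ->
  0 < Defs.sigma L x0 /\ Defs.sigma L x0 < PI / 2 /\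
  Defs.sigma L x0 ^ 2 = PI ^ 2 * (x0 / (L + x0)) /\ L < kk L x0.
Proof.
  intros h1 h2.
  assert (hq : 0 < x0 / (L + x0)) by (apply Rdiv_lt_0_compat; lra).
  assert (hq4 : x0 / (L + x0) < / 4).
  { apply (Rmult_lt_reg_r (L + x0)); [lra|]. unfold Rdiv. rewrite Rmult_assoc, Rinv_l by lra. lra. }
  assert (hs : 0 < sqrt (x0 / (L + x0))) by (apply sqrt_lt_R0; lra).
  assert (hs2 : sqrt (x0 / (L + x0)) < / 2).
  { rewrite <- (sqrt_pow2 (/2)) by lra. apply sqrt_lt_1; lra. }
  assert (hpi := PI_RGT_0).
  assert (h0 : 0 < Defs.sigma L x0) by (unfold Defs.sigma; nra).
  assert (hlt : Defs.sigma L x0 < PI / 2) by (unfold Defs.sigma; nra).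
  split; [exact h0|]. split; [exact hlt|]. split.
  { unfold Defs.sigma. rewrite Rpow_mult_distr. rewrite pow2_sqrt by lra. ring. }
  assert (hsin : 0 < sin (Defs.sigma L x0)) by (apply sin_gt_0; lra).
  assert (hsin1 : sin (Defs.sigma L x0) < 1).
  { rewrite <- sin_PI2. apply sin_increasing_1; lra. }
  unfold kk. apply (Rmult_lt_reg_r (sin (Defs.sigma L x0))); [lra|].
  unfold Rdiv. rewrite Rmult_assoc, Rinv_l by lra. nra.
Qed.

Lemma locD (L s : R) : 0 < s < 2 * L -> locally s (fun t => 0 < t < 2 * L).
Proof.
  intros h. apply (locally_open (fun t => 0 < t /\ t < 2 * L)); auto.
  apply open_and; [apply open_gt | apply open_lt].
Qed.

Lemma dF (K L B t : R) : 0 < K^2 - (t-L)^2 ->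
  is_derive (fun t => B * sqrt (K^2 - (t-L)^2)) t (- B * (t - L) / sqrt (K^2 - (t-L)^2)).
Proof.
  intros h. assert (hF : 0 < sqrt (K^2 - (t-L)^2)) by (apply sqrt_lt_R0; lra).
  auto_derive; [lra|].
  replace (K * (K * 1) + - ((t + - L) * ((t + - L) * 1))) with (K^2 - (t-L)^2) by ring.
  field. lra.
Qed.

Lemma dF2 (K L B t : R) : 0 < K^2 - (t-L)^2 ->
  is_derive (fun t => - B * (t - L) / sqrt (K^2 - (t-L)^2)) t
     (- B * K^2 / sqrt (K^2 - (t-L)^2) ^ 3).
Proof.
  intros h. assert (hF : 0 < sqrt (K^2 - (t-L)^2)) by (apply sqrt_lt_R0; lra).
  assert (hF2 : sqrt (K^2 - (t-L)^2) * sqrt (K^2 - (t-L)^2) = K^2 - (t-L)^2) by (apply sqrt_sqrt; lra).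
  auto_derive; replace (K * (K * 1) + - ((t + - L) * ((t + - L) * 1))) with (K^2 - (t-L)^2) by ring.
  { repeat split; try lra. }
  set (F := sqrt (K^2 - (t-L)^2)) in *.
  replace (K^2) with (F*F + (t-L)^2) by lra. field. lra.
Qed.

Ltac fs := repeat split; first [assumption | lra].

Definition Fq (K L t : R) := sqrt (K^2 - (t-L)^2).

Lemma loc_deriv (L : R) (g g' : R -> R) s :
  (forall t, 0 < t < 2 * L -> is_derive g t (g' t)) -> 0 < s < 2 * L ->
  locally s (fun t => Derive g t = g' t).
Proof.
  intros h hs. apply (filter_imp (fun t => 0 < t < 2 * L)); [|apply locD; auto].
  intros t ht. apply is_derive_unique; auto.
Qed.

Lemma loc_ext (L : R) (g h : R -> R) s :
  (forall t, 0 < t < 2 * L -> g t = h t) -> 0 < s < 2 * L ->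
  locally s (fun t => g t = h t).
Proof.
  intros h1 hs. apply (filter_imp (fun t => 0 < t < 2 * L)); [|apply locD; auto]. auto.
Qed.

Lemma dmul (f g : R -> R) (x a b : R) :
  is_derive f x a -> is_derive g x b -> is_derive (fun t => f t * g t) x (a * g x + f x * b).
Proof. intros hf hg. apply (is_derive_mult f g x a b hf hg). intros; apply Rmult_comm. Qed.

Lemma dplus (f g : R -> R) (x a b : R) :
  is_derive f x a -> is_derive g x b -> is_derive (fun t => f t + g t) x (a + b).
Proof. intros hf hg. apply (is_derive_plus f g x a b hf hg). Qed.

Lemma deq (f : R -> R) (x a b : R) : is_derive f x a -> a = b -> is_derive f x b.
Proof. intros h e; subst; exact h. Qed.

Lemma dFq (K L t : R) : 0 < K^2 - (t-L)^2 ->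
  is_derive (Fq K L) t (- (t - L) / Fq K L t).
Proof.
  intros h. apply (is_derive_ext (fun t => 1 * sqrt (K^2 - (t-L)^2))).
  - intros; unfold Fq; apply Rmult_1_l.
  - apply (deq _ _ _ _ (dF K L 1 t h)). unfold Fq. field. apply Rgt_not_eq, sqrt_lt_R0; auto.
Qed.

Lemma dHq (c S K L t : R) : S <> 0 -> 0 < K^2 - (t-L)^2 ->
  is_derive (fun t => c / (S * Fq K L t)) t (c * (t - L) / (S * Fq K L t ^ 3)).
Proof.
  intros hS h. assert (hF : 0 < Fq K L t) by (apply sqrt_lt_R0; auto).
  assert (d := dFq K L t h).
  apply (is_derive_ext (fun t => c * / (S * Fq K L t))); [intros; reflexivity|].
  apply (deq _ _ (c * (- (S * (- (t - L) / Fq K L t)) / (S * Fq K L t) ^ 2))).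
  - apply is_derive_scal. apply (is_derive_inv (fun t => S * Fq K L t)).
    + apply is_derive_scal; auto.
    + apply Rmult_integral_contrapositive; split; lra.
  - field. split; lra.
Qed.

Theorem mainTheorem17 (L x0 mu nu : R) :
  0 < 3 * x0 -> 3 * x0 < L -> 0 < mu ->
  (mu <> 1 ->
     is_solution L x0 mu nu
       (fun s => nu / ((2 - lam L x0) * (1 - mu)) * / H L x0 s)) /\
  (mu = 1 ->
     is_solution L x0 mu nu
       (fun s => nu / (2 * lam L x0) * theta L x0 s * (s - L))).
Proof.
  intros h1 h2 hmu0.
  destruct (basics L x0 h1 h2) as (hS0 & hS1 & hS2 & hK).
  set (S := Defs.sigma L x0) in *. set (K := kk L x0) in *.
  assert (hpi := PI_RGT_0).
  assert (hpos : forall t, 0 < t < 2 * L -> 0 < K^2 - (t-L)^2) by (intros t ht; nra).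
  assert (hFp : forall t, 0 < t < 2 * L -> 0 < Fq K L t) by (intros t ht; apply sqrt_lt_R0; auto).
  assert (hH : forall t, H L x0 t = PI / (S * Fq K L t)) by reflexivity.
  assert (hlam : 2 - lam L x0 = 2 * x0 / (L + x0)) by (unfold lam; field; lra).
  assert (hlam' : lam L x0 = 2 * L / (L + x0)) by reflexivity.
  assert (hlam0 : 2 - lam L x0 <> 0).
  { rewrite hlam. assert (2 * x0 / (L + x0) > 0) by (apply Rdiv_lt_0_compat; lra). lra. }
  assert (hlam1 : lam L x0 <> 0).
  { rewrite hlam'. assert (2 * L / (L + x0) > 0) by (apply Rdiv_lt_0_compat; lra). lra. }
  split.
  - intros hmu. assert (hmu1 : 1 - mu <> 0) by lra.
    set (B := nu / ((2 - lam L x0) * (1 - mu)) * S / PI).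
    assert (E : (fun s => nu / ((2 - lam L x0) * (1 - mu)) * / H L x0 s) = (fun t => B * Fq K L t)).
    { extensionality t. rewrite hH, Rinv_div. unfold B. field. split; [lra|]. split; [|lra].
      rewrite hlam. assert (2 * x0 / (L + x0) > 0) by (apply Rdiv_lt_0_compat; lra). lra. }
    rewrite E. intros s hs.
    assert (d1 : forall t, 0 < t < 2 * L -> is_derive (fun t => B * Fq K L t) t (- B * (t - L) / Fq K L t))
      by (intros t ht; apply dF; auto).
    assert (d2 : forall t, 0 < t < 2 * L -> is_derive (fun t => - B * (t - L) / Fq K L t) t (- B * K^2 / Fq K L t ^ 3))
      by (intros t ht; apply dF2; auto).
    assert (D2u : forall t, 0 < t < 2 * L -> Derive_n (fun t => B * Fq K L t) 2 t = - B * K^2 / Fq K L t ^ 3).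
    { intros t ht. simpl Derive_n.
      rewrite (Derive_ext_loc _ (fun t => - B * (t - L) / Fq K L t)).
      - apply is_derive_unique; auto.
      - apply loc_deriv with L; auto. }
    set (K1 := -2 * B * K^2 * S^3 / PI^3).
    assert (rG : forall t, 0 < t < 2 * L ->
       rcoef L x0 t * Derive_n (fun t => B * Fq K L t) 2 t = K1).
    { intros t ht. rewrite D2u by auto. unfold rcoef. rewrite hH. unfold K1.
      assert (Fq K L t > 0) by (apply hFp; auto). field. lra. }
    set (G := fun t => rcoef L x0 t * Derive_n (fun t => B * Fq K L t) 2 t).
    assert (dG : forall t, 0 < t < 2 * L -> is_derive G t 0).
    { intros t ht. apply (is_derive_ext_loc (fun _ => K1)).
      - apply loc_ext with L; auto. intros; symmetry; apply rG; auto.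
      - exact (is_derive_const K1 t). }
    assert (dDG : is_derive (Derive G) s 0).
    { apply (is_derive_ext_loc (fun _ => 0)).
      - apply (filter_imp _ _ (fun t h => eq_sym h)). apply loc_deriv with L; auto.
      - exact (is_derive_const 0 s). }
    set (c2 := -2 * B * S / PI).
    assert (dQ : is_derive (fun t => qcoef L x0 t * Derive (fun t => B * Fq K L t) t) s c2).
    { apply (is_derive_ext_loc (fun t => c2 * (t - L))).
      - apply loc_ext with L; auto. intros t ht.
        assert (e1 : Derive (fun t => B * Fq K L t) t = - B * (t - L) / Fq K L t) by (apply is_derive_unique; auto). rewrite e1. unfold qcoef. rewrite hH. unfold c2.
        assert (Fq K L t > 0) by (apply hFp; auto). field. lra.
      - auto_derive; auto. ring. }
    refine (conj (ex_intro _ _ (d1 s hs)) _).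
    refine (conj (ex_intro _ (- B * K^2 / Fq K L s ^ 3) _) _).
    { apply (is_derive_ext_loc (fun t => - B * (t - L) / Fq K L t)).
      - apply (filter_imp _ _ (fun t h => eq_sym h)). apply loc_deriv with L; auto.
      - auto. }
    refine (conj (ex_intro _ _ (dG s hs)) _).
    refine (conj (ex_intro _ _ dDG) _).
    refine (conj (ex_intro _ _ dQ) _).
    change (Derive (Derive G) s + mu * Derive (fun t => qcoef L x0 t * Derive (fun t => B * Fq K L t) t) s
       + pcoef L x0 s * (B * Fq K L s) = nu).
    assert (eD : Derive (Derive G) s = 0) by (apply is_derive_unique; exact dDG).
    assert (eQ : Derive (fun t => qcoef L x0 t * Derive (fun t => B * Fq K L t) t) s = c2) by (apply is_derive_unique; exact dQ).
    rewrite eD, eQ.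
    unfold pcoef. rewrite hH.
    assert (hc2 : c2 = -2 * (nu / ((2 - lam L x0) * (1 - mu))) * (x0 / (L + x0))).
    { unfold c2, B. transitivity (-2 * (nu / ((2 - lam L x0) * (1 - mu))) * (S^2 / PI^2)).
      - field. fs.
      - rewrite hS2. field. fs. }
    rewrite hc2. unfold B. assert (Fq K L s > 0) by (apply hFp; auto). rewrite hlam. field. fs.
  - intros hmu. subst mu.
    set (C := nu / (2 * lam L x0)). intros s hs.
    assert (cH : forall z, 0 <= z < 2 * L -> continuous (H L x0) z).
    { intros z hz. apply (@ex_derive_continuous R_AbsRing R_NormedModule (H L x0) z). eexists.
      apply (dHq PI S K L z); [lra|nra]. }
    assert (dth : forall t, 0 < t < 2 * L -> is_derive (theta L x0) t (H L x0 t)).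
    { intros t ht. apply is_derive_RInt with 0; [|apply cH; lra].
      apply (filter_imp (fun b => 0 < b < 2 * L)); [|apply locD; auto].
      intros b hb. unfold theta. apply (@RInt_correct R_CompleteNormedModule). apply ex_RInt_continuous.
      intros z hz. rewrite Rmin_left, Rmax_right in hz by lra. apply cH; lra. }
    assert (dH : forall t, 0 < t < 2 * L -> is_derive (H L x0) t (PI * (t - L) / (S * Fq K L t ^ 3))).
    { intros t ht. apply (dHq PI S K L t); [lra|auto]. }
    set (g1 := fun t => C * (H L x0 t * (t - L) + theta L x0 t)).
    assert (du : forall t, 0 < t < 2 * L ->
      is_derive (fun t => C * theta L x0 t * (t - L)) t (g1 t)).
    { intros t ht. apply (deq _ _ _ _ (dmul (fun t => C * theta L x0 t) (fun t => t - L) t _ _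
         (is_derive_scal _ _ C _ (dth t ht)) ltac:(auto_derive; auto))).
      unfold g1. ring. }
    set (g2 := fun t => C * (PI * (t - L) / (S * Fq K L t ^ 3) * (t - L) + 2 * H L x0 t)).
    assert (d2u : forall t, 0 < t < 2 * L -> is_derive g1 t (g2 t)).
    { intros t ht. unfold g1. apply is_derive_scal.
      apply (deq _ _ _ _ (dplus _ _ t _ _ (dmul (H L x0) (fun t => t - L) t _ _ (dH t ht)
           ltac:(auto_derive; auto)) (dth t ht))).
      unfold g2. ring. }
    assert (D2u : forall t, 0 < t < 2 * L -> Derive_n (fun t => C * theta L x0 t * (t - L)) 2 t = g2 t).
    { intros t ht. simpl Derive_n.
      rewrite (Derive_ext_loc _ g1).
      - apply is_derive_unique; auto.
      - apply loc_deriv with L; auto. }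
    set (cP := 2 * C * S^2 / PI^2).
    assert (rG : forall t, 0 < t < 2 * L ->
       rcoef L x0 t * Derive_n (fun t => C * theta L x0 t * (t - L)) 2 t = cP * (2 * K^2 - (t - L)^2)).
    { intros t ht. rewrite D2u by auto. unfold rcoef, g2. rewrite !hH. unfold cP.
      assert (Fq K L t > 0) by (apply hFp; auto).
      replace (K^2) with (Fq K L t * Fq K L t + (t-L)^2)
        by (unfold Fq; rewrite sqrt_sqrt; [ring | apply Rlt_le, hpos; auto]).
      field. fs. }
    set (G := fun t => rcoef L x0 t * Derive_n (fun t => C * theta L x0 t * (t - L)) 2 t).
    assert (dG : forall t, 0 < t < 2 * L -> is_derive G t (- 2 * cP * (t - L))).
    { intros t ht. apply (is_derive_ext_loc (fun t => cP * (2 * K^2 - (t - L)^2))).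
      - apply loc_ext with L; auto. intros; symmetry; apply rG; auto.
      - auto_derive; auto. ring. }
    assert (dDG : is_derive (Derive G) s (- 2 * cP)).
    { apply (is_derive_ext_loc (fun t => - 2 * cP * (t - L))).
      - apply (filter_imp _ _ (fun t h => eq_sym h)). apply loc_deriv with L; auto.
      - auto_derive; auto. ring. }
    set (cQ := 2 * C * S / PI).
    set (dQv := 2 * C + cQ * (- (s - L) / Fq K L s * theta L x0 s + Fq K L s * H L x0 s)).
    assert (dQ : is_derive (fun t => qcoef L x0 t * Derive (fun t => C * theta L x0 t * (t - L)) t) s dQv).
    { apply (is_derive_ext_loc (fun t => 2 * C * (t - L) + cQ * (Fq K L t * theta L x0 t))).
      - apply loc_ext with L; auto. intros t ht.
        assert (e1 : Derive (fun t => C * theta L x0 t * (t - L)) t = g1 t) by (apply is_derive_unique; auto).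
        rewrite e1. unfold qcoef, g1, cQ. rewrite hH.
        assert (Fq K L t > 0) by (apply hFp; auto). field. fs.
      - assert (lin : is_derive (fun t => 2 * C * (t - L)) s (2 * C)) by (auto_derive; auto; ring).
        apply (deq _ _ _ _ (dplus _ (fun t => cQ * (Fq K L t * theta L x0 t)) s _ _ lin
           (is_derive_scal _ _ cQ _ (dmul (Fq K L) (theta L x0) s _ _ (dFq K L s (hpos s hs)) (dth s hs))))).
        unfold dQv. ring. }
    refine (conj (ex_intro _ _ (du s hs)) _).
    refine (conj (ex_intro _ (g2 s) _) _).
    { apply (is_derive_ext_loc g1).
      - apply (filter_imp _ _ (fun t h => eq_sym h)). apply loc_deriv with L; auto.
      - auto. }
    refine (conj (ex_intro _ _ (dG s hs)) _).
    refine (conj (ex_intro _ _ dDG) _).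
    refine (conj (ex_intro _ _ dQ) _).
    change (Derive (Derive G) s + 1 * Derive (fun t => qcoef L x0 t * Derive (fun t => C * theta L x0 t * (t - L)) t) s
       + pcoef L x0 s * (C * theta L x0 s * (s - L)) = nu).
    assert (eD : Derive (Derive G) s = - 2 * cP) by (apply is_derive_unique; exact dDG).
    assert (eQ : Derive (fun t => qcoef L x0 t * Derive (fun t => C * theta L x0 t * (t - L)) t) s = dQv)
      by (apply is_derive_unique; exact dQ).
    rewrite eD, eQ.
    assert (hnu : nu = C * (2 * lam L x0)) by (unfold C; field; fs).
    assert (hq : x0 / (L + x0) = S^2 / PI^2) by (rewrite hS2; field; fs).
    assert (hlS : lam L x0 = 2 - 2 * (S^2 / PI^2)) by (rewrite <- hq; lra).
    rewrite hnu. unfold dQv, cQ, cP, pcoef. rewrite !hH, hlS.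
    assert (Fq K L s > 0) by (apply hFp; auto).
    field. fs.
Qed.
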